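(* Let $n,k\ge1$, $d\ge3$. The cumulant homoscedastic secant variety $\log(\operatorname{Sec}^H_k(\mathcal G_{n,d}))\subseteq\mathbb{A}^K_{n,d}$ is a cone over $C^0_{n,k,d}$: writing $\mathbb{A}^K_{n,d}=\mathbb{A}^{K,1}\times\mathbb{A}^{K,2}\times\mathbb{A}^{K,3}_{n,d}$ (cumulants of order $1$, order $2$, and orders $3$ to $d$), its closure equals $\mathbb{A}^{K,1}\times\mathbb{A}^{K,2}\times C^0_{n,k,d}$, i.e. the first and second order cumulants are unconstrained and the cumulants of orders $3,\dots,d$ range exactly over $C^0_{n,k,d}$.
   Context: Let $u=(u_1,\dots,u_n)$, $V$ the space of real linear forms in $u$. The cumulant space $\mathbb{A}^K_{n,d}$ consists of truncated series $\sum_{1\le|a|\le d}\kappa_au^a/a!$ in $\mathbb{R}[u]/(u)^{d+1}$; $\mathbb{A}^{K,3}_{n,d}$ those with only terms of degree $3,\dots,d$. For a homoscedastic parameter $((\mu_i),(\lambda_i),\Sigma)$ ($\mu_i\in\mathbb{R}^n$, $\sum\lambda_i=1$, $\Sigma$ real symmetric $n\times n$) the cumulant vector is the truncation of $\log\big(\sum_i\lambda_i\exp(u^t\mu_i+\frac12u^t\Sigma u)\big)$; $\log(\operatorname{Sec}^H_k(\mathcal G_{n,d}))$ is the (closure of the) set of these. Let $\Theta^0_{n,k}=\{((L_i),(\lambda_i))\in V^k\times\mathbb{R}^k:\sum\lambda_i=1,\ \sum\lambda_iL_i=0\}$ (centered Dirac mixtures), for $A=((L_i),(\lambda_i))$ let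 $K_A(u)=\log(\sum_i\lambda_ie^{L_i(u)})$ with homogeneous parts $K_A(u)_j$, let $\phi_{n,k,d}:\Theta^0_{n,k}\to\mathbb{A}^{K,3}_{n,d}$, $A\mapsto K_A(u)_3+\dots+K_A(u)_d$, and $C^0_{n,k,d}=\overline{\phi_{n,k,d}(\Theta^0_{n,k})}$. *)

(* Defs.v *)
From HB Require Import structures.
From mathcomp Require Import all_boot all_order all_algebra.
From mathcomp Require Import reals.
From mathcomp Require Import mpoly.

Set Implicit Arguments.
Unset Strict Implicit.
Unset Printing Implicit Defensive.

Import Order.TTheory GRing.Theory Num.Theory.
Local Open Scope ring_scope.

Section Cumulants.
Variables (R : realType) (n : nat).

Definition trunc_deg (a b : nat) (p : {mpoly R[n]}) : {mpoly R[n]} :=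
  \sum_(m <- msupp p | (a <= mdeg m <= b)%N) p@_m *: 'X_[m].

(* Truncated exponential: exp(f) mod (u)^{d+1}, for f without constant term. *)
Definition texp (d : nat) (f : {mpoly R[n]}) : {mpoly R[n]} :=
  trunc_deg 0 d (\sum_(j < d.+1) (j`!%:R)^-1 *: f ^+ j).

(* Truncated logarithm: log(g) mod (u)^{d+1}, for g with constant term 1,
   via log(1+h) = sum_{j>=1} (-1)^(j+1) h^j / j. *)
Definition tlog (d : nat) (g : {mpoly R[n]}) : {mpoly R[n]} :=
  trunc_deg 0 d (\sum_(1 <= j < d.+1) ((-1) ^+ j.+1 / j%:R) *: (g - 1) ^+ j).

Definition linform (c : 'I_n -> R) : {mpoly R[n]} := \sum_(j < n) c j *: 'X_j.

Definition halfquad (S : 'M[R]_n) : {mpoly R[n]} :=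
  2%:R^-1 *: \sum_(j < n) \sum_(l < n) S j l *: ('X_j * 'X_l).

Definition in_cumulant_space (d : nat) (p : {mpoly R[n]}) : Prop :=
  forall m : 'X_{1..n}, (mdeg m == 0%N) || (d < mdeg m)%N -> p@_m = 0.

(* Euclidean closure of a set of (truncated) series (coefficientwise, sup-norm). *)
Definition closure_mp (S : {mpoly R[n]} -> Prop) (p : {mpoly R[n]}) : Prop :=
  forall eps : R, 0 < eps ->
    exists q, S q /\ forall m : 'X_{1..n}, `|p@_m - q@_m| < eps.

Definition homosc_cumulant (k d : nat) (mu : 'I_k -> 'I_n -> R)
    (lam : 'I_k -> R) (S : 'M[R]_n) : {mpoly R[n]} :=
  trunc_deg 1 d
    (tlog d (\sum_(i < k) lam i *: texp d (linform (mu i) + halfquad S))).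

Definition homosc_cumulant_set (k d : nat) (p : {mpoly R[n]}) : Prop :=
  exists (mu : 'I_k -> 'I_n -> R) (lam : 'I_k -> R) (S : 'M[R]_n),
    \sum_(i < k) lam i = 1 /\ S^T = S /\ p = homosc_cumulant d mu lam S.

Definition log_sec_homosc (k d : nat) : {mpoly R[n]} -> Prop :=
  closure_mp (homosc_cumulant_set k d).

(* Theta^0_{n,k}: centered Dirac mixtures A = ((L_i),(lambda_i)),
   L_i(u) = u^t c_i. *)
Definition in_Theta0 (k : nat) (c : 'I_k -> 'I_n -> R) (lam : 'I_k -> R) : Prop :=
  \sum_(i < k) lam i = 1 /\ \sum_(i < k) lam i *: linform (c i) = 0.

Definition phi_dirac (k d : nat) (c : 'I_k -> 'I_n -> R) (lam : 'I_k -> R)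
  : {mpoly R[n]} :=
  trunc_deg 3 d (tlog d (\sum_(i < k) lam i *: texp d (linform (c i)))).

Definition C0 (k d : nat) : {mpoly R[n]} -> Prop :=
  closure_mp (fun p => exists (c : 'I_k -> 'I_n -> R) (lam : 'I_k -> R),
    in_Theta0 c lam /\ p = phi_dirac d c lam).

End Cumulants.

(* Main.v *)
Require Import Defs.
From HB Require Import structures.
From mathcomp Require Import all_boot all_order all_algebra.
From mathcomp Require Import reals.
From mathcomp Require Import mpoly.
From mathcomp Require Import ring.
From mathcomp Require Import zify.
Set Implicit Arguments.
Unset Strict Implicit.
Unset Printing Implicit Defensive.
Import Order.TTheory GRing.Theory Num.Theory.
Local Open Scope ring_scope.



Section Aux.
Variables (R : realType) (n : nat).
Implicit Types (p q : {mpoly R[n]}).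

Definition vge (k : nat) p := forall m : 'X_{1..n}, (mdeg m < k)%N -> p@_m = 0.

Lemma vge0 k : vge k 0. Proof. by move=> m _; rewrite mcoeff0. Qed.
Lemma vgeD k p q : vge k p -> vge k q -> vge k (p + q).
Proof. by move=> hp hq m hm; rewrite mcoeffD hp ?hq ?addr0. Qed.
Lemma vgeN k p : vge k p -> vge k (- p).
Proof. by move=> hp m hm; rewrite mcoeffN hp ?oppr0. Qed.
Lemma vgeB k p q : vge k p -> vge k q -> vge k (p - q).
Proof. by move=> hp hq; apply: vgeD => //; apply: vgeN. Qed.
Lemma vgeZ k c p : vge k p -> vge k (c *: p).
Proof. by move=> hp m hm; rewrite mcoeffZ hp ?mulr0. Qed.
Lemma vge_sum k (I : Type) (r : seq I) (P : pred I) (F : I -> {mpoly R[n]}) :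
  (forall i, P i -> vge k (F i)) -> vge k (\sum_(i <- r | P i) F i).
Proof.
move=> h; elim/big_rec: _ => [|i x Pi hx]; first exact: vge0.
by apply: vgeD => //; apply: h.
Qed.
Lemma vgeW k l p : (l <= k)%N -> vge k p -> vge l p.
Proof. by move=> hlk hp m hm; apply: hp; apply: leq_trans hlk. Qed.
Lemma vge_0 p : vge 0 p. Proof. by []. Qed.

Lemma vgeM a b p q : vge a p -> vge b q -> vge (a + b) (p * q).
Proof.
move=> hp hq m hm; rewrite mcoeffM big1 // => k /eqP e.
have : (mdeg k.1 + mdeg k.2 < a + b)%N by rewrite -mdegD -e.
case: (ltnP (mdeg k.1) a) => h1 h2; first by rewrite hp ?mul0r.
by rewrite hq ?mulr0 //; rewrite -(ltn_add2l (mdeg k.1)); apply: leq_trans h2 _; rewrite leq_add2r.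
Qed.

Lemma vgeX a p j : vge a p -> vge (a * j) (p ^+ j).
Proof.
move=> hp; elim: j => [|j ih]; first by rewrite muln0.
by rewrite exprS mulnS; apply: vgeM.
Qed.

Definition vle (k : nat) p := forall m : 'X_{1..n}, (k < mdeg m)%N -> p@_m = 0.
Lemma vle0 k : vle k 0. Proof. by move=> m _; rewrite mcoeff0. Qed.
Lemma vleD k p q : vle k p -> vle k q -> vle k (p + q).
Proof. by move=> hp hq m hm; rewrite mcoeffD hp ?hq ?addr0. Qed.
Lemma vleZ k c p : vle k p -> vle k (c *: p).
Proof. by move=> hp m hm; rewrite mcoeffZ hp ?mulr0. Qed.
Lemma vle_sum k (I : Type) (r : seq I) (P : pred I) (F : I -> {mpoly R[n]}) :
  (forall i, P i -> vle k (F i)) -> vle k (\sum_(i <- r | P i) F i).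
Proof.
move=> h; elim/big_rec: _ => [|i x Pi hx]; first exact: vle0.
by apply: vleD => //; apply: h.
Qed.
Lemma vleM a b p q : vle a p -> vle b q -> vle (a + b) (p * q).
Proof.
move=> hp hq m hm; rewrite mcoeffM big1 // => k /eqP e.
have : (a + b < mdeg k.1 + mdeg k.2)%N by rewrite -mdegD -e.
case: (leqP (mdeg k.1) a) => h1 h2; last by rewrite hp ?mul0r.
rewrite hq ?mulr0 //; rewrite -(ltn_add2l a); apply: leq_trans h2 _; by rewrite leq_add2r.
Qed.
Lemma vleX1 (i : 'I_n) : vle 1 ('X_i).
Proof. by move=> m hm; rewrite mcoeffX; case: eqP hm => // <-; rewrite mdeg1. Qed.
Lemma vgeX1 (i : 'I_n) : vge 1 ('X_i).
Proof. by move=> m hm; rewrite mcoeffX; case: eqP hm => // <-; rewrite mdeg1. Qed.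

End Aux.



Section B.
Variables (R : realType) (n : nat).
Implicit Types (p q : {mpoly R[n]}).

Lemma truncE a b p m :
  (trunc_deg a b p)@_m = if (a <= mdeg m <= b)%N then p@_m else 0.
Proof.
rewrite /trunc_deg raddf_sum /=.
under eq_bigr do rewrite mcoeffZ mcoeffX.
rewrite -big_filter.
case: (boolP (m \in msupp p)) => hm.
- case: ifP => hab.
  + rewrite (bigD1_seq m) ?filter_uniq ?msupp_uniq //=; last by rewrite mem_filter hab.
    rewrite eqxx mulr1 big1 ?addr0 // => i /negbTE ->; by rewrite mulr0.
  + rewrite big1_seq // => i /andP[_]; rewrite mem_filter => /andP[hi _].
    by case: eqP hi => [->|]; rewrite ?hab ?mulr0.
- have -> : p@_m = 0 by apply/eqP; rewrite mcoeff_eq0.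
  rewrite if_same big1_seq // => i /andP[_]; rewrite mem_filter => /andP[_ hi].
  by case: eqP hi => [->|]; rewrite ?(negbTE hm) ?mulr0.
Qed.

Definition eqm (d : nat) p q := vge d.+1 (p - q).

Lemma eqm_refl d p : eqm d p p. Proof. by rewrite /eqm subrr; apply: vge0. Qed.
Lemma eqm_sym d p q : eqm d p q -> eqm d q p.
Proof. by rewrite /eqm => h; rewrite -opprB; apply: vgeN. Qed.
Lemma eqm_trans d p q r : eqm d p q -> eqm d q r -> eqm d p r.
Proof. by move=> h1 h2; rewrite /eqm -(subrKA q); apply: vgeD. Qed.
Lemma eqmD d p q p' q' : eqm d p p' -> eqm d q q' -> eqm d (p + q) (p' + q').
Proof. by move=> h1 h2; rewrite /eqm opprD addrACA; apply: vgeD. Qed.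
Lemma eqmN d p q : eqm d p q -> eqm d (- p) (- q).
Proof. by move=> h; rewrite /eqm -opprD; apply: vgeN. Qed.
Lemma eqmB d p q p' q' : eqm d p p' -> eqm d q q' -> eqm d (p - q) (p' - q').
Proof. by move=> h1 h2; apply: eqmD => //; apply: eqmN. Qed.
Lemma eqmZ d c p q : eqm d p q -> eqm d (c *: p) (c *: q).
Proof. by move=> h; rewrite /eqm -scalerBr; apply: vgeZ. Qed.
Lemma eqmM d p q p' q' : eqm d p p' -> eqm d q q' -> eqm d (p * q) (p' * q').
Proof.
move=> h1 h2; rewrite /eqm.
have -> : p * q - p' * q' = (p - p') * q + p' * (q - q').
  by rewrite mulrBl mulrBr addrA subrK.
apply: vgeD; first by rewrite -[d.+1]addn0; apply: vgeM.
by rewrite -[d.+1]add0n; apply: vgeM.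
Qed.
Lemma eqmX d p q j : eqm d p q -> eqm d (p ^+ j) (q ^+ j).
Proof.
move=> h; elim: j => [|j ih]; first by rewrite !expr0; apply: eqm_refl.
by rewrite !exprS; apply: eqmM.
Qed.
Lemma eqm_sum d (I : Type) (r : seq I) (P : pred I) (F G : I -> {mpoly R[n]}) :
  (forall i, P i -> eqm d (F i) (G i)) ->
  eqm d (\sum_(i <- r | P i) F i) (\sum_(i <- r | P i) G i).
Proof.
move=> h; elim/big_rec2: _ => [|i x y Pi hx]; first exact: eqm_refl.
by apply: eqmD => //; apply: h.
Qed.
Lemma eqm_vge d p q : eqm d p q -> vge d.+1 (p - q). Proof. by []. Qed.

Lemma trunc_eqm d p : eqm d (trunc_deg 0 d p) p.
Proof.
move=> m hm; rewrite mcoeffB truncE /=.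
by rewrite ifT ?subrr.
Qed.

Lemma eqm_trunc d a b p q : (b <= d)%N -> eqm d p q -> trunc_deg a b p = trunc_deg a b q.
Proof.
move=> hb h; apply/mpolyP => m; rewrite !truncE.
case: ifP => // /andP[_ hmb]; apply/eqP; rewrite -subr_eq0 -mcoeffB; apply/eqP.
by apply: h; rewrite ltnS; apply: leq_trans hb.
Qed.

Lemma vge_trunc k a b p : vge k p -> vge k (trunc_deg a b p).
Proof. by move=> h m hm; rewrite truncE h ?if_same. Qed.

Definition ev (h : {mpoly R[n]}) (P : {poly R}) : {mpoly R[n]} := horner_alg h P.

Lemma ev_eqm d a b P : eqm d a b -> eqm d (ev a P) (ev b P).
Proof.
move=> h; elim/poly_ind: P => [|P c ih]; first by rewrite /ev !rmorph0; apply: eqm_refl.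
rewrite /ev !rmorphD !rmorphM /= !horner_algC !horner_algX.
by apply: eqmD; [apply: eqmM | apply: eqm_refl].
Qed.

Lemma ev_vge k h P : vge 1 h -> (exists T, P = T * 'X^k) -> vge k (ev h P).
Proof.
move=> hh [T ->]; rewrite /ev rmorphM rmorphXn /= horner_algX.
rewrite -[k]add0n; apply: vgeM => //; have := @vgeX _ _ 1 h k hh; by rewrite mul1n.
Qed.

End B.



Section C.
Variable (R : realType).
Implicit Types (P Q : {poly R}).

Definition Tser (A : lalgType R) (d : nat) (z : A) : A :=
  \sum_(j < d.+1) (j`!%:R)^-1 *: z ^+ j.
Definition Sser (A : lalgType R) (d : nat) (z : A) : A :=
  \sum_(i < d) ((-1) ^+ i.+2 / i.+1%:R) *: z ^+ i.+1.

Lemma Tser_morph (A B : lalgType R) (f : {lrmorphism A -> B}) d z :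
  f (Tser d z) = Tser d (f z).
Proof. rewrite /Tser rmorph_sum; apply: eq_bigr => j _. by rewrite -rmorphXn; apply: linearZ_LR. Qed.
Lemma Sser_morph (A B : lalgType R) (f : {lrmorphism A -> B}) d z :
  f (Sser d z) = Sser d (f z).
Proof. by rewrite /Sser rmorph_sum; apply: eq_bigr => j _; rewrite -rmorphXn; apply: linearZ_LR. Qed.

Definition pdv (k : nat) (P : {poly R}) := exists T, P = T * 'X^k.

Lemma pdv_coef k P : (forall i, (i < k)%N -> P`_i = 0) -> pdv k P.
Proof.
move=> h; exists (drop_poly k P); rewrite -{1}(poly_take_drop k P).
suff -> : take_poly k P = 0 by rewrite add0r.
by apply/polyP => i; rewrite coef_take_poly coef0; case: ifP => // /h.
Qed.
Lemma coef_pdv k P i : pdv k P -> (i < k)%N -> P`_i = 0.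
Proof. by move=> [T ->] hi; rewrite coefMXn hi. Qed.
Lemma pdvD k P Q : pdv k P -> pdv k Q -> pdv k (P + Q).
Proof. by move=> [T ->] [U ->]; exists (T + U); rewrite mulrDl. Qed.
Lemma pdvN k P : pdv k P -> pdv k (- P).
Proof. by move=> [T ->]; exists (- T); rewrite mulNr. Qed.
Lemma pdvMl k P Q : pdv k P -> pdv k (Q * P).
Proof. by move=> [T ->]; exists (Q * T); rewrite mulrA. Qed.
Lemma pdvZ k c P : pdv k P -> pdv k (c *: P).
Proof. by move=> [T ->]; exists (c *: T); rewrite scalerAl. Qed.
Lemma pdvX k P : P`_0 = 0 -> pdv k (P ^+ k).
Proof.
move=> h0; have [T ->] : pdv 1 P by apply: pdv_coef => -[|i].
by exists (T ^+ k); rewrite exprMn expr1.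
Qed.
Lemma pdvW k l P : (l <= k)%N -> pdv k P -> pdv l P.
Proof. by move=> hl [T ->]; exists (T * 'X^(k - l)); rewrite -mulrA -exprD subnK. Qed.

Lemma geom_id (Z : {poly R}) d :
  (1 + Z) * \sum_(i < d) (- Z) ^+ i = 1 - (- Z) ^+ d.
Proof.
have e := subrX1 (- Z) d.
have -> : 1 + Z = - (- Z - 1) by rewrite opprD !opprK addrC.
by rewrite mulNr -e opprB.
Qed.

Lemma deriv_Tser d (Z : {poly R}) :
  (Tser d Z)^`() = Z^`() * (Tser d Z - (d`!%:R)^-1 *: Z ^+ d).
Proof.
rewrite {2}/Tser big_ord_recr /= addrK mulr_sumr.
rewrite /Tser linear_sum big_ord_recl /= derivZ expr0 derivC scaler0 add0r.
apply: eq_bigr => i _; rewrite derivZ deriv_exp /bump /= add1n -scalerAr.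
rewrite add0n -scaler_nat scalerA; congr (_ *: _).
rewrite factS natrM invfM mulrC mulrA mulfV ?mul1r //.
by rewrite pnatr_eq0.
Qed.

Lemma deriv_Sser d (Z : {poly R}) :
  (Sser d Z)^`() = Z^`() * \sum_(i < d) (- Z) ^+ i.
Proof.
rewrite /Sser linear_sum mulr_sumr; apply: eq_bigr => i _.
rewrite linearZ /= deriv_exp /= -scaler_nat scalerA -scaleN1r exprZn -scalerAr.
congr (_ *: _).
rewrite -mulrA mulVf ?pnatr_eq0 // mulr1.
by rewrite !exprS !mulN1r opprK.
Qed.

Lemma Sser_coef0 d (Z : {poly R}) : Z`_0 = 0 -> (Sser d Z)`_0 = 0.
Proof.
move=> h; rewrite -horner_coef0 /Sser horner_sum big1 // => i _.
by rewrite hornerZ horner_exp horner_coef0 h expr0n mulr0.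
Qed.
Lemma Tser_coef0 d (Z : {poly R}) : Z`_0 = 0 -> (Tser d Z)`_0 = 1.
Proof.
move=> h; rewrite -horner_coef0 /Tser horner_sum big_ord_recl /= big1.
  by rewrite hornerZ expr0 hornerC fact0 invr1 mulr1 addr0.
by move=> i _; rewrite hornerZ horner_exp horner_coef0 h expr0n mulr0.
Qed.

Lemma rec_F (F : {poly R}) d : F`_0 = 1 ->
  (forall i, (i < d)%N -> F`_(i.+1) *+ i.+1 + F`_i *+ i = F`_i) ->
  forall i, (i <= d)%N -> F`_i = (1 + 'X)`_i.
Proof.
move=> h0 hr; elim=> [|i ih] hi; first by rewrite coefD coef1 coefX h0 addr0.
have := hr i hi; rewrite ih ?(ltnW hi) // coefD coef1 coefX coefD coef1 coefX.
clear ih hi; case: i => [|[|i]] /= e.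
- by rewrite ?mulr0n ?mulr1n ?addr0 ?add0r in e *.
- rewrite ?mulr0n ?mulr1n ?addr0 ?add0r in e *.
  move/eqP: e; rewrite -subr_eq0 addrK.
  by rewrite -mulr_natr mulf_eq0 pnatr_eq0 orbF => /eqP.
- rewrite ?mulr0n ?mul0rn ?mulr1n ?addr0 ?add0r in e *.
  by move/eqP: e; rewrite mul0rn addr0 -mulr_natr mulf_eq0 pnatr_eq0 orbF => /eqP.
Qed.

Lemma rec_G (G : {poly R}) d : G`_0 = 0 ->
  (forall i, (i < d)%N -> G`_(i.+1) *+ i.+1 = (i == 0)%:R) ->
  forall i, (i <= d)%N -> G`_i = 'X`_i.
Proof.
move=> h0 hr [|i] hi; first by rewrite coefX h0.
have := hr i hi; rewrite coefX /=.
case: i {hi} => [|i] /=; first by rewrite mulr1n.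
by move=> /eqP; rewrite ?mulr0n -mulr_natr mulf_eq0 pnatr_eq0 orbF => /eqP.
Qed.

Lemma pdvMr k P Q : pdv k P -> pdv k (P * Q).
Proof. by move=> h; rewrite mulrC; apply: pdvMl. Qed.

Lemma U1 d : pdv d.+1 (Tser d (Sser d 'X) - (1 + 'X)).
Proof.
set L := Sser d 'X; set F := Tser d L.
have L0 : L`_0 = 0 by apply: Sser_coef0; rewrite coefX.
have dL : L^`() = \sum_(i < d) (- 'X) ^+ i by rewrite /L deriv_Sser derivX mul1r.
have key : pdv d ((1 + 'X) * F^`() - F).
  rewrite /F deriv_Tser -/F mulrA dL geom_id.
  set A := _ *: _; set P := (- 'X) ^+ d.
  have -> : (1 - P) * (F - A) - F = - (P * (F - A)) - A by ring.
  apply: pdvD; first by apply: pdvN; apply: pdvMr; apply: pdvX; rewrite coefN coefX oppr0.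
  by apply: pdvN; apply: pdvZ; apply: pdvX.
apply: pdv_coef => i hi; apply/eqP; rewrite coefB subr_eq0; apply/eqP.
apply: (rec_F (d := d)) => //; first exact: Tser_coef0.
move=> j hj; have := coef_pdv key hj.
rewrite coefB mulrDl mul1r coefD coefXM coef_deriv.
case: j {hj} => [|j] /=; first by rewrite mulr0n addr0 => /eqP; rewrite subr_eq0 => /eqP.
by rewrite coef_deriv => /eqP; rewrite subr_eq0 => /eqP.
Qed.

Lemma U2 d : pdv d.+1 (Sser d (Tser d 'X - 1) - 'X).
Proof.
set Z := Tser d 'X - 1; set G := Sser d Z.
have Z0 : Z`_0 = 0 by rewrite /Z coefB Tser_coef0 ?coefX // coef1 subrr.
have dZ : Z^`() = (1 + Z) - (d`!%:R)^-1 *: 'X ^+ d.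
  by rewrite /Z derivB derivC subr0 deriv_Tser derivX mul1r (addrC 1) subrK.
have key : pdv d (G^`() - 1).
  rewrite /G deriv_Sser dZ.
  set A := _ *: _; set S := \sum_(i < d) _.
  have -> : ((1 + Z) - A) * S - 1 = ((1 + Z) * S - 1) - A * S by ring.
  rewrite /S geom_id -/S.
  have -> : 1 - (- Z) ^+ d - 1 = - ((- Z) ^+ d) by ring.
  apply: pdvD; first by apply: pdvN; apply: pdvX; rewrite coefN Z0 oppr0.
  apply: pdvN; apply: pdvMr; apply: pdvZ.
  by exists 1; rewrite mul1r.
apply: pdv_coef => i hi; apply/eqP; rewrite coefB subr_eq0; apply/eqP.
apply: (rec_G (d := d)) => //; first exact: Sser_coef0.
move=> j hj; have := coef_pdv key hj.
by rewrite coefB coef_deriv coef1 => /eqP; rewrite subr_eq0 => /eqP.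
Qed.

End C.



Section E.
Variables (R : realType) (n : nat).
Implicit Types (p q a b f g h x y : {mpoly R[n]}).

Lemma term_id (a b : {mpoly R[n]}) i j : (i <= j)%N ->
  (j`!%:R)^-1 *: ((a ^+ (j - i) * b ^+ i) *+ 'C(j, i)) =
  ((i`!%:R)^-1 *: b ^+ i) * (((j - i)`!%:R)^-1 *: a ^+ (j - i)).
Proof.
move=> hij; rewrite -scaler_nat scalerA -scalerAl -scalerAr scalerA mulrC.
congr (_ *: _).
have e := bin_fact hij.
have hC : ('C(j, i)%:R : R) != 0 by rewrite pnatr_eq0 -lt0n bin_gt0.
have hi : (i`!%:R : R) != 0 by rewrite pnatr_eq0 -lt0n fact_gt0.
have hji : ((j - i)`!%:R : R) != 0 by rewrite pnatr_eq0 -lt0n fact_gt0.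
rewrite -e !natrM; field.
  by rewrite hC hi hji.
exact: mulrC.
Qed.

Lemma Tser_split d a b :
  Tser d (a + b) = \sum_(i < d.+1) ((i`!%:R)^-1 *: b ^+ i) *
      \sum_(l < d.+1 - i) ((l`!%:R)^-1 *: a ^+ l).
Proof.
rewrite /Tser.
transitivity (\sum_(0 <= j < d.+1) \sum_(0 <= i < d.+1)
   (if (i <= j)%N then ((i`!%:R)^-1 *: b ^+ i) * (((j - i)`!%:R)^-1 *: a ^+ (j - i)) else 0)).
  rewrite big_mkord; apply: eq_bigr => j _.
  rewrite exprDn scaler_sumr -(big_mkord xpredT (fun i => (j`!%:R)^-1 *: ((a ^+ (j - i) * b ^+ i) *+ 'C(j, i)))).
  rewrite (big_nat_widen _ _ _ _ _ (ltn_ord j)) big_mkcond /=.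
  apply: eq_bigr => i _; rewrite ltnS; case: ifP => // hij; exact: term_id.
rewrite exchange_big_nat big_mkord; apply: eq_bigr => i _.
rewrite -big_mkcond /= -mulr_sumr; congr (_ * _).
rewrite -(big_nat_widenl _ _ _ xpredT (fun j => ((j - i)`!%:R)^-1 *: a ^+ (j - i)) (leq0n i)).
rewrite -{1}[nat_of_ord i]add0n big_addn big_mkord; apply: eq_bigr => l _; by rewrite addnK.
Qed.

Lemma vge_pow k p j : vge 1 p -> (k <= j)%N -> vge k (p ^+ j).
Proof. by move=> h hk; apply: (vgeW hk); have := @vgeX R n 1 p j h; rewrite mul1n. Qed.

Lemma Tser_add d a b : vge 1 a -> vge 1 b ->
  eqm d (Tser d a * Tser d b) (Tser d (a + b)).
Proof.
move=> ha hb; rewrite Tser_split mulrC {1}[Tser d b]/Tser mulr_suml.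
apply: eqm_sum => i _; rewrite /eqm -mulrBr.
have hi : (i <= d.+1)%N by apply: ltnW.
rewrite -{1}(subnKC hi); apply: vgeM; first by apply: vgeZ; apply: vge_pow.
rewrite /Tser -!(big_mkord xpredT (fun l => (l`!%:R)^-1 *: a ^+ l)).
rewrite (big_cat_nat (leq0n _) (leq_subr i d.+1)) /= addrC addrK.
rewrite big_nat_cond; apply: vge_sum => l /andP[/andP[hl _] _].
by apply: vgeZ; apply: vge_pow.
Qed.

Lemma texpE d f : texp d f = trunc_deg 0 d (Tser d f). Proof. by []. Qed.
Lemma tlogE d g : tlog d g = trunc_deg 0 d (Sser d (g - 1)).
Proof. by rewrite /tlog /Sser big_add1 /= big_mkord. Qed.

Lemma Tser_eqm d e a b : eqm e a b -> eqm e (Tser d a) (Tser d b).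
Proof. by move=> h; apply: eqm_sum => j _; apply: eqmZ; apply: eqmX. Qed.
Lemma Sser_eqm d e a b : eqm e a b -> eqm e (Sser d a) (Sser d b).
Proof. by move=> h; apply: eqm_sum => j _; apply: eqmZ; apply: eqmX. Qed.

Lemma texp_eqm d a b : eqm d a b -> texp d a = texp d b.
Proof. by move=> h; rewrite !texpE; apply: (eqm_trunc (d := d)) => //; apply: Tser_eqm. Qed.
Lemma tlog_eqm d a b : eqm d a b -> tlog d a = tlog d b.
Proof.
move=> h; rewrite !tlogE; apply: (eqm_trunc (d := d)) => //; apply: Sser_eqm.
by apply: eqmB => //; apply: eqm_refl.
Qed.

Lemma vge1_eqm d x y : eqm d x y -> vge 1 y -> vge 1 x.
Proof.
move=> h hy m hm; rewrite -(subrK y x) mcoeffD hy // addr0.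
by apply: h; apply: leq_trans hm _.
Qed.

Lemma vge1_tlog d g : vge 1 (g - 1) -> vge 1 (tlog d g).
Proof.
move=> h; rewrite tlogE; apply: vge_trunc; apply: vge_sum => i _.
by apply: vgeZ; apply: vge_pow.
Qed.

Lemma vge1_Tser d h : vge 1 h -> vge 1 (Tser d h - 1).
Proof.
move=> hh; rewrite /Tser big_ord_recl /= fact0 invr1 scale1r expr0. have e : forall u v : {mpoly R[n]}, u + v - u = v by move=> u v; rewrite addrC addKr. rewrite e.
by apply: vge_sum => i _; apply: vgeZ; apply: vge_pow.
Qed.

Lemma vge1_texp d h : vge 1 h -> vge 1 (texp d h - 1).
Proof.
move=> hh; apply: (vge1_eqm (d := d) (y := Tser d h - 1)); last exact: vge1_Tser.
by apply: eqmB; [apply: trunc_eqm | apply: eqm_refl].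
Qed.

Lemma ev_Z h c P : ev h (c *: P) = c *: ev h P.
Proof. by rewrite /ev -mul_polyC rmorphM /= horner_algC mulr_algl. Qed.
Lemma Tser_ev d h P : ev h (Tser d P) = Tser d (ev h P).
Proof.
rewrite /Tser {1}/ev rmorph_sum; apply: eq_bigr => j _.
apply: etrans (ev_Z _ _ _) _; by rewrite /ev rmorphXn.
Qed.
Lemma Sser_ev d h P : ev h (Sser d P) = Sser d (ev h P).
Proof.
rewrite /Sser {1}/ev rmorph_sum; apply: eq_bigr => j _.
apply: etrans (ev_Z _ _ _) _; by rewrite /ev rmorphXn.
Qed.

Lemma ev_D h P Q : ev h (P + Q) = ev h P + ev h Q. Proof. exact: rmorphD. Qed.
Lemma ev_B h P Q : ev h (P - Q) = ev h P - ev h Q. Proof. exact: rmorphB. Qed.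
Lemma ev_1 h : ev h 1 = 1. Proof. exact: rmorph1. Qed.
Lemma ev_X h : ev h 'X = h. Proof. exact: horner_algX. Qed.

Lemma exp_log d g : vge 1 (g - 1) -> eqm d (texp d (tlog d g)) g.
Proof.
move=> hg.
apply: (eqm_trans (q := Tser d (tlog d g))); first exact: trunc_eqm.
apply: (eqm_trans (q := Tser d (Sser d (g - 1)))).
  by apply: Tser_eqm; rewrite tlogE; apply: trunc_eqm.
have -> : Tser d (Sser d (g - 1)) = ev (g - 1) (Tser d (Sser d 'X)).
  by rewrite Tser_ev Sser_ev ev_X.
apply: (eqm_trans (q := ev (g - 1) (1 + 'X))).
  rewrite /eqm -ev_B; apply: ev_vge => //; exact: U1.
rewrite ev_D ev_1 ev_X addrC subrK; exact: eqm_refl.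
Qed.

Lemma log_exp d h : vge 1 h -> eqm d (tlog d (texp d h)) h.
Proof.
move=> hh; rewrite tlogE.
apply: (eqm_trans (q := Sser d (texp d h - 1))); first exact: trunc_eqm.
apply: (eqm_trans (q := Sser d (Tser d h - 1))).
  by apply: Sser_eqm; apply: eqmB; [apply: trunc_eqm | apply: eqm_refl].
have -> : Sser d (Tser d h - 1) = ev h (Sser d (Tser d 'X - 1)).
  by rewrite Sser_ev ev_B ev_1 Tser_ev ev_X.
apply: (eqm_trans (q := ev h 'X)).
  rewrite /eqm -ev_B; apply: ev_vge => //; exact: U2.
rewrite ev_X; exact: eqm_refl.
Qed.

Lemma texp_add d a b : vge 1 a -> vge 1 b ->
  eqm d (texp d (a + b)) (texp d a * texp d b).
Proof.
move=> ha hb; apply: eqm_sym.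
apply: (eqm_trans (q := Tser d a * Tser d b)); first by apply: eqmM; apply: trunc_eqm.
apply: (eqm_trans (q := Tser d (a + b))); first exact: Tser_add.
apply: eqm_sym; exact: trunc_eqm.
Qed.

End E.



Section F.
Variables (R : realType) (n : nat).
Implicit Types (p q a b f g h x y : {mpoly R[n]}) (c : 'I_n -> R) (S : 'M[R]_n).

Lemma linformD c c' : linform c + linform c' = linform (fun j => c j + c' j).
Proof. by rewrite /linform -big_split; apply: eq_bigr => j _; rewrite scalerDl. Qed.
Lemma eq_linform c c' : c =1 c' -> linform c = linform c'.
Proof. by move=> e; apply: eq_bigr => j _; rewrite e. Qed.
Lemma linformZ (r : R) c : r *: linform c = linform (fun j => r * c j).
Proof. by rewrite /linform scaler_sumr; apply: eq_bigr => j _; rewrite scalerA. Qed.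
Lemma linform_sum k (lam : 'I_k -> R) (mu : 'I_k -> 'I_n -> R) :
  \sum_(i < k) lam i *: linform (mu i) = linform (fun j => \sum_(i < k) lam i * mu i j).
Proof.
rewrite /linform; under eq_bigr do rewrite scaler_sumr.
rewrite exchange_big; apply: eq_bigr => j _; rewrite scaler_suml.
by apply: eq_bigr => i _; rewrite scalerA.
Qed.

Lemma vge1_lin c : vge 1 (linform c).
Proof. by apply: vge_sum => j _; apply: vgeZ; apply: vgeX1. Qed.
Lemma vle1_lin c : vle 1 (linform c).
Proof. by apply: vle_sum => j _; apply: vleZ; apply: vleX1. Qed.
Lemma vge1_Q S : vge 1 (halfquad S).
Proof.
apply: vgeZ; apply: vge_sum => j _; apply: vge_sum => l _; apply: vgeZ.
by apply: (@vgeW _ _ 2); [| apply: (@vgeM _ _ 1 1); apply: vgeX1].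
Qed.
Lemma vle2_Q S : vle 2 (halfquad S).
Proof.
apply: vleZ; apply: vle_sum => j _; apply: vle_sum => l _; apply: vleZ.
by apply: (@vleM _ _ 1 1); apply: vleX1.
Qed.

Lemma key_identity d k (mu : 'I_k -> 'I_n -> R) (lam : 'I_k -> R) S m0 :
  \sum_(i < k) lam i = 1 ->
  eqm d (tlog d (\sum_(i < k) lam i *: texp d (linform (mu i) + halfquad S)))
        (linform m0 + halfquad S +
          tlog d (\sum_(i < k) lam i *: texp d (linform (fun j => mu i j - m0 j)))).
Proof.
move=> hl.
pose a := linform m0 + halfquad S.
pose b := fun i => linform (fun j => mu i j - m0 j).
pose Gc := \sum_(i < k) lam i *: texp d (b i).
have ha : vge 1 a by apply: vgeD; [apply: vge1_lin | apply: vge1_Q].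
have hb i : vge 1 (b i) by apply: vge1_lin.
have eab i : linform (mu i) + halfquad S = a + b i.
  rewrite /a /b addrAC linformD; congr (_ + _); apply: eq_linform => j.
  by rewrite addrC subrK.
have e1 : eqm d (\sum_(i < k) lam i *: texp d (linform (mu i) + halfquad S)) (texp d a * Gc).
  rewrite /Gc mulr_sumr; apply: eqm_sum => i _; rewrite eab -scalerAr.
  by apply: eqmZ; apply: texp_add.
rewrite (tlog_eqm e1).
have hG : vge 1 (Gc - 1).
  have -> : Gc - 1 = \sum_(i < k) lam i *: (texp d (b i) - 1).
    rewrite /Gc; under [RHS]eq_bigr do rewrite scalerBr.
    by rewrite sumrB -scaler_suml hl scale1r.
  by apply: vge_sum => i _; apply: vgeZ; apply: vge1_texp.
have hT := vge1_tlog d hG.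
have e2 : eqm d (texp d a * Gc) (texp d (a + tlog d Gc)).
  apply: (eqm_trans (q := texp d a * texp d (tlog d Gc))).
    by apply: eqmM; [apply: eqm_refl | apply: eqm_sym; apply: exp_log].
  by apply: eqm_sym; apply: texp_add.
rewrite (tlog_eqm e2); apply: log_exp.
exact: vgeD.
Qed.

End F.



Section G.
Variables (R : realType) (n : nat).
Implicit Types (p q a b f g h x y : {mpoly R[n]}) (c : 'I_n -> R) (S : 'M[R]_n).

Definition rep12 (P : {mpoly R[n]}) :=
  exists (m0 : 'I_n -> R) (S : 'M[R]_n), S^T = S /\ P = linform m0 + halfquad S.

Lemma halfquad0 : halfquad (0 : 'M[R]_n) = 0.
Proof.
rewrite /halfquad big1 ?scaler0 // => j _; rewrite big1 // => l _.
by rewrite mxE scale0r.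
Qed.
Lemma halfquadD S S' : halfquad (S + S') = halfquad S + halfquad S'.
Proof.
rewrite /halfquad -scalerDr -big_split; congr (_ *: _); apply: eq_bigr => j _.
rewrite -big_split; apply: eq_bigr => l _; by rewrite mxE scalerDl.
Qed.
Lemma halfquadZ (r : R) S : halfquad (r *: S) = r *: halfquad S.
Proof.
rewrite /halfquad scalerA mulrC -scalerA; congr (_ *: _).
rewrite scaler_sumr; apply: eq_bigr => j _; rewrite scaler_sumr.
by apply: eq_bigr => l _; rewrite mxE scalerA.
Qed.
Lemma linform0 : linform (fun _ : 'I_n => 0 : R) = 0.
Proof. by rewrite /linform big1 // => j _; rewrite scale0r. Qed.

Lemma rep0 : rep12 0.
Proof.
exists (fun _ => 0), 0; split; first by apply/matrixP => i j; rewrite !mxE.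
by rewrite linform0 halfquad0 addr0.
Qed.
Lemma repD P Q : rep12 P -> rep12 Q -> rep12 (P + Q).
Proof.
move=> [m1 [S1 [h1 ->]]] [m2 [S2 [h2 ->]]].
exists (fun j => m1 j + m2 j), (S1 + S2); split.
  apply/matrixP => i j; rewrite !mxE.
  by rewrite -{1}h1 -{1}h2 !mxE.
by rewrite -linformD halfquadD addrACA.
Qed.
Lemma repZ (r : R) P : rep12 P -> rep12 (r *: P).
Proof.
move=> [m1 [S1 [h1 ->]]].
exists (fun j => r * m1 j), (r *: S1); split.
  by apply/matrixP => i j; rewrite !mxE -{1}h1 mxE.
by rewrite scalerDr linformZ halfquadZ.
Qed.

Lemma sum2_delta (F : 'I_n -> 'I_n -> {mpoly R[n]}) l j :
  \sum_(a < n) \sum_(b < n) ((a == l) && (b == j))%:R *: F a b = F l j.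
Proof.
rewrite (bigD1 l) //= [X in _ + X]big1 => [|a hal]; last first.
  by apply: big1 => b _; rewrite (negbTE hal) /= scale0r.
rewrite addr0 (bigD1 j) //= [X in _ + X]big1 => [|b hbj]; last by rewrite eqxx (negbTE hbj) scale0r.
by rewrite !eqxx scale1r addr0.
Qed.

Lemma rep_mono (m : 'X_{1..n}) : (1 <= mdeg m <= 2)%N -> rep12 'X_[m].
Proof.
case/andP=> h1 h2.
have [e1|ne1] := eqVneq (mdeg m) 1%N.
  move/eqP: e1 => /mdeg1P [i /eqP ->].
  exists (fun l => (l == i)%:R), 0; split; first by apply/matrixP => a b; rewrite !mxE.
  rewrite halfquad0 addr0 /linform (bigD1 i) //= eqxx scale1r big1 ?addr0 //.
  by move=> l /negbTE ->; rewrite scale0r.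
have e2 : mdeg m = 2%N by apply/eqP; rewrite eqn_leq h2 /=; rewrite ltn_neqAle eq_sym ne1 h1.
have [j hj] : exists j, (0 < m j)%N.
  case: (boolP [exists j, 0 < m j]%N) => [/existsP //|/existsPn hn].
  have m0 : m = 0%MM by apply/mnmP => i; rewrite mnm0E; move: (hn i); rewrite lt0n negbK => /eqP.
  by move: e2; rewrite m0 mdeg0.
have hle : (U_(j) <= m)%MM.
  by apply/mnm_lepP => i; rewrite mnm1E; case: eqP => // <-.
have em := submK hle.
have e1' : mdeg (m - U_(j))%MM = 1%N.
  by move: e2; rewrite -{1}em mdegD mdeg1 addn1 => -[].
move/eqP: e1' => /mdeg1P [l /eqP el].
rewrite -em el mpolyXD.
pose E := (delta_mx l j : 'M[R]_n).
exists (fun _ => 0), (E + E^T); split.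
  by apply/matrixP => a b; rewrite !mxE addrC.
rewrite linform0 add0r /halfquad.
have -> : \sum_(a < n) \sum_(b < n) (E + E^T) a b *: ('X_a * 'X_b) =
  \sum_(a < n) \sum_(b < n) ((a == l) && (b == j))%:R *: ('X_a * 'X_b : {mpoly R[n]}) +
  \sum_(a < n) \sum_(b < n) ((a == j) && (b == l))%:R *: ('X_a * 'X_b : {mpoly R[n]}).
  rewrite -big_split; apply: eq_bigr => a _; rewrite -big_split; apply: eq_bigr => b _.
  by rewrite !mxE scalerDl (andbC (b == l)).
rewrite !sum2_delta (mulrC 'X_j) -mulr2n -scaler_nat scalerA mulVf ?scale1r //.
by rewrite pnatr_eq0.
Qed.

Lemma rep_trunc X : rep12 (trunc_deg 1 2 X).
Proof.
rewrite /trunc_deg; elim/big_rec: _ => [|m x hm hx]; first exact: rep0.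
by apply: repD => //; apply: repZ; apply: rep_mono.
Qed.

End G.



Section H.
Variables (R : realType) (n : nat).

Lemma abs_lt_all (x : R) : (forall eps : R, 0 < eps -> `|x| < eps) -> x = 0.
Proof.
move=> h; apply/eqP; apply/negPn/negP => hx.
by have := h `|x|; rewrite normr_gt0 hx ltxx => /(_ isT).
Qed.

Lemma homosc_decomp d k (mu : 'I_k -> 'I_n -> R) (lam : 'I_k -> R) (S : 'M[R]_n) m0 :
  \sum_(i < k) lam i = 1 ->
  homosc_cumulant d mu lam S = trunc_deg 1 d (linform m0 + halfquad S +
     tlog d (\sum_(i < k) lam i *: texp d (linform (fun j => mu i j - m0 j)))).
Proof.
move=> hl; rewrite /homosc_cumulant; apply: (eqm_trunc (d := d)) => //.
exact: key_identity.
Qed.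

End H.

Theorem lemma3p3 (R : realType) (n k d : nat) :
  (1 <= n)%N -> (1 <= k)%N -> (3 <= d)%N ->
  forall p : {mpoly R[n]},
    log_sec_homosc k d p <->
    (in_cumulant_space d p /\ C0 k d (trunc_deg 3 d p)).
Proof.
move=> hn hk hd p; split.
- move=> hp; split.
    move=> m hm; apply: abs_lt_all => eps he.
    have [q [[mu [lam [S [hl [hS ->]]]]] hq]] := hp eps he.
    have := hq m; rewrite /homosc_cumulant truncE.
    have -> : (1 <= mdeg m <= d)%N = false.
      by apply/negbTE; move: hm; lia.
    by rewrite subr0.
  move=> eps he.
  have [q [[mu [lam [S [hl [hS ->]]]]] hq]] := hp eps he.
  pose m0 := fun j => \sum_(i < k) lam i * mu i j.
  exists (trunc_deg 3 d (homosc_cumulant d mu lam S)); split.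
    exists (fun i j => mu i j - m0 j), lam; split.
      split => //; rewrite linform_sum -linform0; apply: eq_linform => j.
      under eq_bigr do rewrite mulrBr.
      by rewrite sumrB -mulr_suml hl mul1r subrr.
    rewrite (homosc_decomp d mu S m0 hl); apply/mpolyP => m.
    rewrite /phi_dirac !truncE; case: ifP => // /andP[h3 h4].
    rewrite ifT; last by apply/andP; split => //; apply: leq_trans h3.
    have hA : vle 2 (linform m0) by move=> m1 hm1; apply: vle1_lin; apply: ltnW.
    rewrite mcoeffD (vleD hA (vle2_Q S)) ?add0r //.
    by rewrite /tlog truncE.
  move=> m; rewrite (truncE 3 d p) (truncE 3 d (homosc_cumulant d mu lam S)); case: ifP => _; first exact: hq.
  by rewrite subrr normr0.
- case=> hcum hC eps he.
  have [q [[c [lam [[hl hc] ->]]] hq]] := hC eps he.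
  pose T := tlog d (\sum_(i < k) lam i *: texp d (linform (c i))).
  have [m0 [S [hS eP]]] := rep_trunc (p - T).
  exists (homosc_cumulant d (fun i j => c i j + m0 j) lam S); split.
    by exists (fun i j => c i j + m0 j), lam, S.
  move=> m; rewrite (homosc_decomp d _ S m0 hl).
  have -> : \sum_(i < k) lam i *: texp d (linform (fun j => c i j + m0 j - m0 j)) =
            \sum_(i < k) lam i *: texp d (linform (c i)).
    apply: eq_bigr => i _; congr (_ *: texp d _); apply: eq_linform => j.
    by rewrite addrK.
  rewrite -/T -eP truncE; case: ifP => hm.
    rewrite mcoeffD truncE; case: ifP => h2.
      by rewrite mcoeffB subrK subrr normr0.
    rewrite add0r; have := hq m; rewrite /phi_dirac !truncE -/T.
    have -> : (3 <= mdeg m <= d)%N by move: hm h2; lia.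
    by [].
  rewrite hcum ?sub0r ?normrN ?normr0 //.
  by move: hm; lia.
Qed.
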